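(* Consider a two-hop amplify-and-forward network with a source, a destination and $K$ energy-harvesting relays $R_1,\dots,R_K$, each with a battery, operating over time slots $t=1,2,\dots$. In slot $t$ the source transmits with power $P$; relay $R_k$ splits its received power $P|h_k(t)|^2$ with ratios $\lambda_{k,I}(t),\lambda_{k,F}(t),\lambda_{k,B}(t)\ge0$, $\lambda_{k,I}(t)+\lambda_{k,F}(t)+\lambda_{k,B}(t)=1$: fraction $\lambda_{k,I}(t)$ is used for information (then corrupted by noise of variance $\sigma_b^2>0$), fraction $\lambda_{k,F}(t)$ is harvested for immediate forwarding, giving power $\eta_1\lambda_{k,F}(t)P|h_k(t)|^2$, and fraction $\lambda_{k,B}(t)$ charges the battery, adding energy $\eta_1\eta_2\lambda_{k,B}(t)P|h_k(t)|^2$, where $\eta_1,\eta_2\in(0,1]$. The relay additionally discharges $b_{k,F}(t)$ with $0\le b_{k,F}(t)\le B_k(t)$ from its battery, where $B_k(t)$ is the battery level at the start of slot $t$, and transmits with power $p_{k,R}(t)=\eta_1\lambda_{k,F}(t)P|h_k(t)|^2+b_{k,F}(t)$; the battery evolves as $B_k(t+1)=B_k(t)+\eta_1\eta_2\lambda_{k,B}(t)P|h_k(t)|^2-b_{k,F}(t)$. With amplification gain $\beta_k(t)=\sqrt{p_{k,R}(t)/(\lambda_{k,I}(t)P|h_k(t)|^2+\sigma_b^2)}$ and phase-aligned distributed beamforming, the SNR at the destination in slot $t$ is $$SNR(t)=\frac{P\Big(\sum_{k=1}^K\beta_k(t)|h_k(t)g_k(t)|\sqrt{\lambda_{k,I}(t)}\Big)^2}{\sum_{k=1}^K\beta_k(t)^2|g_k(t)|^2\sigma_b^2+\sigma_D^2},$$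 with $\sigma_D^2>0$. In the greedy method, at each slot $t$ the decision $(\lambda_{k,I}(t),\lambda_{k,F}(t),\lambda_{k,B}(t),b_{k,F}(t))_{k}$ is chosen to maximize $\tfrac12\log(1+SNR(t))$ given the current battery levels $B_k(t)$, ignoring the effect on later slots. If all batteries are empty initially ($B_k(1)=0$ for all $k$), then the greedy-optimized joint power-splitting and battery operation design uses up the harvested energy at each transmission: $\lambda_{k,B}(t)=0$ and $b_{k,F}(t)=0$ for all $k$ and all $t$, and all batteries remain empty.
   Context: $h_k(t)$ and $g_k(t)$ are the complex source–relay and relay–destination channel gains in slot $t$; $\eta_1$ is the RF-to-DC conversion efficiency and $\eta_2$ the battery storage efficiency. Antenna noise is neglected. Battery energies take values in a discrete set of levels, which does not affect the statement since no charging/discharging occurs. *)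

(* Defs.v *)
From Stdlib Require Import Reals List.
From Coquelicot Require Import Coquelicot.
Open Scope R_scope.

(* rsum K f = f 0 + ... + f (K-1); relays R_1..R_K are indexed 0..K-1. *)
Definition rsum (K : nat) (f : nat -> R) : R :=
  fold_right Rplus 0 (map f (seq 0 K)).

Record decision := mkDecision {
  lamI : R;
  lamF : R;
  lamB : R;
  bF   : R
}.

Definition feasible (Bk : R) (d : decision) : Prop :=
  0 <= lamI d /\ 0 <= lamF d /\ 0 <= lamB d /\
  lamI d + lamF d + lamB d = 1 /\ 0 <= bF d <= Bk.

Definition relay_power (eta1 P : R) (h : C) (d : decision) : R :=
  eta1 * lamF d * P * (Cmod h) ^ 2 + bF d.

Definition amp_gain (eta1 P sb2 : R) (h : C) (d : decision) : R :=
  sqrt (relay_power eta1 P h d / (lamI d * P * (Cmod h) ^ 2 + sb2)).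

Definition SNR (K : nat) (P eta1 sb2 sD2 : R) (h g : nat -> C)
    (d : nat -> decision) : R :=
  P * (rsum K (fun k => amp_gain eta1 P sb2 (h k) (d k) * Cmod (h k * g k)
                         * sqrt (lamI (d k)))) ^ 2
  / (rsum K (fun k => (amp_gain eta1 P sb2 (h k) (d k)) ^ 2 * (Cmod (g k)) ^ 2 * sb2)
     + sD2).

Definition rate (K : nat) (P eta1 sb2 sD2 : R) (h g : nat -> C)
    (d : nat -> decision) : R :=
  / 2 * ln (1 + SNR K P eta1 sb2 sD2 h g d).

Definition battery_next (eta1 eta2 P : R) (h : C) (Bk : R) (d : decision) : R :=
  Bk + eta1 * eta2 * lamB d * P * (Cmod h) ^ 2 - bF d.

(* A greedy trajectory: slots t = 1, 2, ...; h t k, g t k channel gains of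
   relay k in slot t; D t k the decision of relay k in slot t; B t k the
   battery level of relay k at the start of slot t. *)
Definition greedy_trajectory (K : nat) (P eta1 eta2 sb2 sD2 : R)
    (h g : nat -> nat -> C) (D : nat -> nat -> decision) (B : nat -> nat -> R) : Prop :=
  (forall t k, (1 <= t)%nat -> (k < K)%nat ->
     B (S t) k = battery_next eta1 eta2 P (h t k) (B t k) (D t k)) /\
  (forall t, (1 <= t)%nat ->
     (forall k, (k < K)%nat -> feasible (B t k) (D t k)) /\
     (forall d' : nat -> decision,
        (forall k, (k < K)%nat -> feasible (B t k) (d' k)) ->
        rate K P eta1 sb2 sD2 (h t) (g t) d' <= rate K P eta1 sb2 sD2 (h t) (g t) (D t))).

(* Main.v *)
Require Import Defs.
From Stdlib Require Import Reals List Lra Lia Psatz.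
From Coquelicot Require Import Coquelicot.
Open Scope R_scope.

Lemma fold_shift (l : list R) x : fold_right Rplus x l = fold_right Rplus 0 l + x.
Proof. induction l; simpl; [lra| rewrite IHl; lra]. Qed.

Lemma rsum_S K f : rsum (S K) f = rsum K f + f K.
Proof.
  unfold rsum. rewrite seq_S, map_app, fold_right_app. simpl.
  rewrite fold_shift. lra.
Qed.

Lemma rsum_ext K f f' : (forall j, (j < K)%nat -> f j = f' j) -> rsum K f = rsum K f'.
Proof.
  induction K; intros H; [reflexivity|].
  rewrite !rsum_S, IHK; [rewrite (H K) by lia; reflexivity|].
  intros; apply H; lia.
Qed.

Lemma rsum_nonneg K f : (forall j, (j < K)%nat -> 0 <= f j) -> 0 <= rsum K f.
Proof.
  induction K; intros H; [unfold rsum; simpl; lra|].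
  rewrite rsum_S. assert (0 <= f K) by (apply H; lia).
  assert (0 <= rsum K f) by (apply IHK; intros; apply H; lia). lra.
Qed.

Definition drop (k : nat) (f : nat -> R) := fun j => if Nat.eq_dec j k then 0 else f j.

Lemma rsum_split K f k : (k < K)%nat -> rsum K f = rsum K (drop k f) + f k.
Proof.
  induction K; intros Hk; [lia|].
  rewrite !rsum_S. destruct (Nat.eq_dec k K) as [->|Hne].
  - unfold drop at 2. destruct (Nat.eq_dec K K); [|congruence].
    rewrite (rsum_ext K (drop K f) f); [lra|].
    intros j Hj; unfold drop; destruct (Nat.eq_dec j K); [lia|reflexivity].
  - rewrite IHK by lia. replace (drop k f K) with (f K) by (unfold drop; destruct (Nat.eq_dec K k); [subst; lia|reflexivity]). lra.
Qed.

Lemma ineq1 P S Tr sD2 y0 y1 z : 0 < P -> 0 <= S -> 0 <= Tr -> 0 < sD2 -> 0 <= y0 -> y0 < y1 -> 0 <= z ->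
  P * (S + y0) ^ 2 / (Tr + z + sD2) < P * (S + y1) ^ 2 / (Tr + z + sD2).
Proof.
  intros. unfold Rdiv. apply Rmult_lt_compat_r.
  - apply Rinv_0_lt_compat; lra.
  - apply Rmult_lt_compat_l; [lra|]. nra.
Qed.

Lemma ineq2 P S Tr sD2 y z : 0 < P -> 0 <= S -> 0 <= Tr -> 0 < sD2 -> 0 < y -> 0 <= z ->
  z * S <= 2 * (Tr + sD2) * y ->
  P * (S + 0) ^ 2 / (Tr + 0 + sD2) < P * (S + y) ^ 2 / (Tr + z + sD2).
Proof.
  intros. set (T := Tr + sD2).
  replace (Tr + 0 + sD2) with T by (unfold T; lra).
  replace (Tr + z + sD2) with (T + z) by (unfold T; lra).
  assert (0 < T) by (unfold T; lra).
  apply Rminus_gt_0_lt.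
  replace (P * (S + y) ^ 2 / (T + z) - P * (S + 0) ^ 2 / T)
    with (P * ((S+y)^2 * T - S^2 * (T + z)) / ((T + z) * T)) by (field; lra).
  apply Rdiv_lt_0_compat. 2: { apply Rmult_lt_0_compat; lra. }
  apply Rmult_lt_0_compat; [lra|].
  assert (S * (z * S) <= S * (2 * T * y)) by (apply Rmult_le_compat_l; unfold T in *; lra).
  assert (0 < y * y * T) by (apply Rmult_lt_0_compat; [apply Rmult_lt_0_compat|]; lra). nra.
Qed.

Definition upd (d : nat -> decision) k e := fun j => if Nat.eq_dec j k then e else d j.

Definition nf eta1 P sb2 (h g : nat -> C) (d : nat -> decision) j :=
  amp_gain eta1 P sb2 (h j) (d j) * Cmod (h j * g j) * sqrt (lamI (d j)).
Definition df eta1 P sb2 (h g : nat -> C) (d : nat -> decision) j :=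
  (amp_gain eta1 P sb2 (h j) (d j)) ^ 2 * (Cmod (g j)) ^ 2 * sb2.

Lemma SNR_split K P eta1 sb2 sD2 h g d k : (k < K)%nat ->
  SNR K P eta1 sb2 sD2 h g d =
  P * (rsum K (drop k (nf eta1 P sb2 h g d)) + nf eta1 P sb2 h g d k) ^ 2 /
  (rsum K (drop k (df eta1 P sb2 h g d)) + df eta1 P sb2 h g d k + sD2).
Proof.
  intros Hk. unfold SNR.
  rewrite (rsum_split K _ k Hk). rewrite (rsum_split K (fun k0 => _ ^ 2 * _ * _) k Hk).
  reflexivity.
Qed.

Lemma drop_nf_upd K eta1 P sb2 h g d k e :
  rsum K (drop k (nf eta1 P sb2 h g (upd d k e))) = rsum K (drop k (nf eta1 P sb2 h g d)).
Proof.
  apply rsum_ext. intros j _. unfold drop, nf, upd.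
  destruct (Nat.eq_dec j k); reflexivity.
Qed.

Lemma drop_df_upd K eta1 P sb2 h g d k e :
  rsum K (drop k (df eta1 P sb2 h g (upd d k e))) = rsum K (drop k (df eta1 P sb2 h g d)).
Proof.
  apply rsum_ext. intros j _. unfold drop, df, upd.
  destruct (Nat.eq_dec j k); reflexivity.
Qed.

Lemma nf_upd_k eta1 P sb2 h g d k e :
  nf eta1 P sb2 h g (upd d k e) k = amp_gain eta1 P sb2 (h k) e * Cmod (h k * g k) * sqrt (lamI e).
Proof. unfold nf, upd. destruct (Nat.eq_dec k k); [reflexivity|congruence]. Qed.

Lemma df_upd_k eta1 P sb2 h g d k e :
  df eta1 P sb2 h g (upd d k e) k = (amp_gain eta1 P sb2 (h k) e) ^ 2 * (Cmod (g k)) ^ 2 * sb2.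
Proof. unfold df, upd. destruct (Nat.eq_dec k k); [reflexivity|congruence]. Qed.

Lemma amp_nonneg eta1 P sb2 h d : 0 <= amp_gain eta1 P sb2 h d.
Proof. apply sqrt_pos. Qed.

Lemma nf_nonneg eta1 P sb2 h g d j : 0 <= nf eta1 P sb2 h g d j.
Proof.
  unfold nf. apply Rmult_le_pos; [apply Rmult_le_pos|apply sqrt_pos].
  apply amp_nonneg. apply Cmod_ge_0.
Qed.

Lemma df_nonneg eta1 P sb2 h g d j : 0 < sb2 -> 0 <= df eta1 P sb2 h g d j.
Proof.
  intros. unfold df. apply Rmult_le_pos; [|lra]. apply Rmult_le_pos; apply pow2_ge_0.
Qed.

Lemma drop_nonneg K k f : (forall j, 0 <= f j) -> 0 <= rsum K (drop k f).
Proof.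
  intros H. apply rsum_nonneg. intros j _. unfold drop. destruct (Nat.eq_dec j k); [lra|apply H].
Qed.

Ltac pos := repeat (match goal with
  | |- 0 < _ ^ 2 => apply pow_lt
  | |- 0 <= _ ^ 2 => apply pow2_ge_0
  | |- 0 < _ * _ => apply Rmult_lt_0_compat
  | |- 0 <= _ * _ => apply Rmult_le_pos end); try lra.

Lemma improve K P eta1 sb2 sD2 (h g : nat -> C) (d : nat -> decision) k :
  0 < P -> 0 < eta1 -> 0 < sb2 -> 0 < sD2 -> (k < K)%nat ->
  h k <> 0%C -> g k <> 0%C -> feasible 0 (d k) -> 0 < lamB (d k) ->
  exists e, feasible 0 e /\
    SNR K P eta1 sb2 sD2 h g d < SNR K P eta1 sb2 sD2 h g (upd d k e).
Proof.
  intros HP He1 Hsb HsD Hk Hh Hg [Hu [Hf [Hb [Hsum [Hb1 Hb2]]]]] Hbpos.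
  assert (HbF : bF (d k) = 0) by lra.
  pose proof (proj1 (Cmod_gt_0 _) Hh) as Hh0. pose proof (proj1 (Cmod_gt_0 _) Hg) as Hg0. clear Hh Hg. rename Hh0 into Hh. rename Hg0 into Hg.
  set (hk := Cmod (h k)) in *. set (gk := Cmod (g k)) in *.
  set (u := lamI (d k)) in *. set (f := lamF (d k)) in *. set (b := lamB (d k)) in *.
  set (S0 := rsum K (drop k (nf eta1 P sb2 h g d))).
  set (Tr := rsum K (drop k (df eta1 P sb2 h g d))).
  assert (HS : 0 <= S0) by (apply drop_nonneg; intros; apply nf_nonneg).
  assert (HT : 0 <= Tr) by (apply drop_nonneg; intros; apply df_nonneg; lra).
  assert (Hhk2 : 0 < hk ^ 2) by (apply pow_lt; lra).
  assert (Hgk2 : 0 < gk ^ 2) by (apply pow_lt; lra).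
  set (Q := P * hk ^ 2).
  assert (HQ : 0 < Q) by (apply Rmult_lt_0_compat; lra).
  assert (Huq : 0 < u * P * hk ^ 2 + sb2) by (assert (0 <= u * Q) by (apply Rmult_le_pos; lra); unfold Q in *; lra).
  destruct (Req_dec f 0) as [Hf0 | Hfpos].
  -
    set (T := Tr + sD2).
    assert (HTp : 0 < T) by (unfold T; lra).
    set (X := eta1 * P * gk ^ 2 * sb2 * (S0 ^ 2 + 1)).
    assert (HX : 0 < X).
    { unfold X. assert (0 <= S0 ^ 2) by apply pow2_ge_0.
      pos. }
    set (v := T ^ 2 / (4 * T ^ 2 + X)).
    assert (HT2 : 0 < T ^ 2) by (apply pow_lt; lra).
    assert (Hv : 0 < v) by (unfold v; apply Rdiv_lt_0_compat; lra).
    assert (Hv4 : v <= / 4).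
    { unfold v. apply (Rmult_le_reg_r (4 * T ^ 2 + X)); [lra|].
      field_simplify; lra. }
    assert (HvX : v * X <= T ^ 2).
    { unfold v. apply (Rmult_le_reg_r (4 * T ^ 2 + X)); [lra|].
      field_simplify; [|lra]. nra. }
    exists (mkDecision (/ 2) v (/ 2 - v) 0).
    split.
    { unfold feasible; simpl; repeat split; lra. }
    rewrite (SNR_split K _ _ _ _ _ _ d k Hk), (SNR_split K _ _ _ _ _ _ (upd d k _) k Hk).
    rewrite drop_nf_upd, drop_df_upd, nf_upd_k, df_upd_k.
    assert (Hamp0 : amp_gain eta1 P sb2 (h k) (d k) = 0).
    { unfold amp_gain, relay_power. fold f. rewrite Hf0, HbF.
      replace (eta1 * 0 * P * Cmod (h k) ^ 2 + 0) with 0 by ring.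
      unfold Rdiv. rewrite Rmult_0_l. apply sqrt_0. }
    replace (nf eta1 P sb2 h g d k) with 0
      by (unfold nf; rewrite Hamp0; ring).
    replace (df eta1 P sb2 h g d k) with 0
      by (unfold df; rewrite Hamp0; ring).
    fold S0 Tr.
    set (a := (eta1 * v * P * hk ^ 2 + 0) / (/ 2 * P * hk ^ 2 + sb2)).
    assert (Hden : 0 < / 2 * P * hk ^ 2 + sb2).
    { assert (0 < / 2 * Q) by lra. unfold Q in *. lra. }
    assert (Ha : 0 < a).
    { unfold a. apply Rdiv_lt_0_compat; [|lra].
      rewrite Rplus_0_r. assert (0 < eta1 * v) by (apply Rmult_lt_0_compat; lra).
      assert (0 < eta1 * v * P) by (apply Rmult_lt_0_compat; lra).
      apply Rmult_lt_0_compat; lra. }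
    assert (Hamp : amp_gain eta1 P sb2 (h k) (mkDecision (/ 2) v (/ 2 - v) 0) = sqrt a)
      by reflexivity.
    rewrite Hamp. simpl lamI. rewrite Cmod_mult. fold hk gk.
    set (be := sqrt a).
    assert (Hbe : 0 < be) by (apply sqrt_lt_R0; lra).
    assert (Hbe2 : be ^ 2 = a) by (apply pow2_sqrt; lra).
    set (s := sqrt (/ 2)).
    assert (Hs : 0 < s) by (apply sqrt_lt_R0; lra).
    assert (Hs2 : s ^ 2 = / 2) by (apply pow2_sqrt; lra).
    apply ineq2; try lra.
    + pos.
    + apply Rmult_le_pos; [|lra]. apply Rmult_le_pos; apply pow2_ge_0.
    + fold T.
      assert (Hkey : be * gk * sb2 * S0 <= 2 * T * hk * s).
      { assert (Hx : 0 <= be * gk * sb2 * S0).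
        { pos. }
        assert (Hy : 0 <= 2 * T * hk * s).
        { pos. }
        rewrite <- (sqrt_pow2 _ Hx), <- (sqrt_pow2 _ Hy).
        apply sqrt_le_1_alt.
        replace ((be * gk * sb2 * S0) ^ 2) with (be ^ 2 * gk ^ 2 * sb2 ^ 2 * S0 ^ 2) by ring.
        replace ((2 * T * hk * s) ^ 2) with (4 * T ^ 2 * hk ^ 2 * s ^ 2) by ring.
        rewrite Hbe2, Hs2.
        assert (Ha' : a <= eta1 * v * P * hk ^ 2 / sb2).
        { unfold a. rewrite Rplus_0_r. unfold Rdiv.
          apply Rmult_le_compat_l.
          - pos.
          - apply Rinv_le_contravar; [lra|]. assert (0 < / 2 * Q) by lra. unfold Q in *. lra. }
        assert (HS2 : 0 <= S0 ^ 2) by apply pow2_ge_0.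
        assert (Hc : 0 <= gk ^ 2 * sb2 ^ 2 * S0 ^ 2).
        { pos. }
        apply Rle_trans with (eta1 * v * P * hk ^ 2 / sb2 * (gk ^ 2 * sb2 ^ 2 * S0 ^ 2)).
        { replace (a * gk ^ 2 * sb2 ^ 2 * S0 ^ 2) with (a * (gk ^ 2 * sb2 ^ 2 * S0 ^ 2)) by ring.
          apply Rmult_le_compat_r; lra. }
        replace (eta1 * v * P * hk ^ 2 / sb2 * (gk ^ 2 * sb2 ^ 2 * S0 ^ 2))
          with (hk ^ 2 * (v * (eta1 * P * gk ^ 2 * sb2 * S0 ^ 2))) by (field; lra).
        assert (v * (eta1 * P * gk ^ 2 * sb2 * S0 ^ 2) <= v * X).
        { apply Rmult_le_compat_l; [lra|]. unfold X.
          assert (0 < eta1 * P * gk ^ 2 * sb2) by (pos).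
          nra. }
        assert (hk ^ 2 * (v * (eta1 * P * gk ^ 2 * sb2 * S0 ^ 2)) <= hk ^ 2 * T ^ 2)
          by (apply Rmult_le_compat_l; lra).
        nra. }
      replace (be ^ 2 * gk ^ 2 * sb2 * S0) with (be * gk * (be * gk * sb2 * S0)) by ring.
      replace (2 * T * (be * (hk * gk) * s)) with (be * gk * (2 * T * hk * s)) by ring.
      apply Rmult_le_compat_l; [|exact Hkey].
      apply Rmult_le_pos; lra.
  -
    assert (Hfp : 0 < f) by lra.
    set (r := f / (u * P * hk ^ 2 + sb2)).
    assert (Hr : 0 < r) by (unfold r; apply Rdiv_lt_0_compat; lra).
    assert (HrQ : 0 < r * Q) by pos.
    set (u' := u + b / (1 + r * Q)).
    assert (Hbq : 0 < b / (1 + r * Q)) by (apply Rdiv_lt_0_compat; lra).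
    assert (Hu' : u < u') by (unfold u'; lra).
    assert (Hu'q : 0 < u' * P * hk ^ 2 + sb2).
    { assert (0 <= u' * Q) by (apply Rmult_le_pos; lra). unfold Q in *. lra. }
    set (v' := r * (u' * P * hk ^ 2 + sb2)).
    assert (Hv' : 0 < v') by (unfold v'; pos).
    exists (mkDecision u' v' 0 0).
    split.
    { unfold feasible; simpl; repeat split; try lra.
      assert (Hrf : r * (u * P * hk ^ 2 + sb2) = f) by (unfold r; field; lra).
      assert (Hb' : b / (1 + r * Q) * (1 + r * Q) = b) by (field; lra).
      assert (E : u' + v' + 0 = u + (b / (1 + r * Q)) * (1 + r * Q) + r * (u * P * hk ^ 2 + sb2))
        by (unfold v', u', Q; ring).
      rewrite E, Hb', Hrf. lra. }
    rewrite (SNR_split K _ _ _ _ _ _ d k Hk), (SNR_split K _ _ _ _ _ _ (upd d k _) k Hk).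
    rewrite drop_nf_upd, drop_df_upd, nf_upd_k, df_upd_k.
    fold S0 Tr.
    assert (Hamp : amp_gain eta1 P sb2 (h k) (mkDecision u' v' 0 0) = amp_gain eta1 P sb2 (h k) (d k)).
    { unfold amp_gain, relay_power. simpl. fold f u hk. rewrite HbF. f_equal.
      unfold v', r. field. lra. }
    assert (Hbe : 0 < amp_gain eta1 P sb2 (h k) (d k)).
    { unfold amp_gain, relay_power. fold f u hk. rewrite HbF. apply sqrt_lt_R0.
      apply Rdiv_lt_0_compat; [|lra]. rewrite Rplus_0_r. pos. }
    unfold nf, df. rewrite Hamp. simpl lamI. fold u.
    apply ineq1; try lra.
    + apply Rmult_le_pos; [|apply sqrt_pos]. apply Rmult_le_pos; [lra|apply Cmod_ge_0].
    + apply Rmult_lt_compat_l.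
      * rewrite Cmod_mult. fold hk gk. pos.
      * apply sqrt_lt_1; lra.
    + apply Rmult_le_pos; [|lra]. pos.
Qed.

Lemma SNR_nonneg K P eta1 sb2 sD2 (h g : nat -> C) d :
  0 < P -> 0 < sb2 -> 0 < sD2 -> 0 <= SNR K P eta1 sb2 sD2 h g d.
Proof.
  intros. unfold SNR. apply Rmult_le_pos.
  - apply Rmult_le_pos; [lra|apply pow2_ge_0].
  - apply Rlt_le, Rinv_0_lt_compat.
    assert (0 <= rsum K (fun k => amp_gain eta1 P sb2 (h k) (d k) ^ 2 * Cmod (g k) ^ 2 * sb2)).
    { apply rsum_nonneg. intros. apply Rmult_le_pos; [|lra].
      apply Rmult_le_pos; apply pow2_ge_0. }
    lra.
Qed.

Lemma key K P eta1 sb2 sD2 (h g : nat -> C) (d : nat -> decision) k :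
  0 < P -> 0 < eta1 -> 0 < sb2 -> 0 < sD2 ->
  (forall j, (j < K)%nat -> h j <> 0%C /\ g j <> 0%C) ->
  (forall j, (j < K)%nat -> feasible 0 (d j)) ->
  (forall d' : nat -> decision, (forall j, (j < K)%nat -> feasible 0 (d' j)) ->
     rate K P eta1 sb2 sD2 h g d' <= rate K P eta1 sb2 sD2 h g d) ->
  (k < K)%nat -> lamB (d k) = 0.
Proof.
  intros HP He1 Hsb HsD Hhg Hfe Hopt Hk.
  pose proof (Hfe k Hk) as Hf. destruct Hf as [_ [_ [Hb _]]].
  destruct (Req_dec (lamB (d k)) 0) as [|Hne]; [assumption|exfalso].
  destruct (Hhg k Hk) as [Hh Hg].
  destruct (improve K P eta1 sb2 sD2 h g d k HP He1 Hsb HsD Hk Hh Hg (Hfe k Hk)) as [e [He Hlt]]; [lra|].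
  assert (Hfe' : forall j, (j < K)%nat -> feasible 0 (upd d k e j)).
  { intros j Hj. unfold upd. destruct (Nat.eq_dec j k); [exact He|apply Hfe; exact Hj]. }
  specialize (Hopt _ Hfe'). unfold rate in Hopt.
  pose proof (SNR_nonneg K P eta1 sb2 sD2 h g d HP Hsb HsD).
  assert (ln (1 + SNR K P eta1 sb2 sD2 h g d) < ln (1 + SNR K P eta1 sb2 sD2 h g (upd d k e)))
    by (apply ln_increasing; lra).
  lra.
Qed.

Theorem theorem1 (K : nat) (P eta1 eta2 sb2 sD2 : R)
    (h g : nat -> nat -> C) (D : nat -> nat -> decision) (B : nat -> nat -> R) :
  0 < P -> 0 < eta1 <= 1 -> 0 < eta2 <= 1 -> 0 < sb2 -> 0 < sD2 ->
  (forall t k, (1 <= t)%nat -> (k < K)%nat -> h t k <> 0%C /\ g t k <> 0%C) ->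
  (forall k, (k < K)%nat -> B 1%nat k = 0) ->
  greedy_trajectory K P eta1 eta2 sb2 sD2 h g D B ->
  forall t k, (1 <= t)%nat -> (k < K)%nat ->
    lamB (D t k) = 0 /\ bF (D t k) = 0 /\ B t k = 0.
Proof.
  intros HP He1 He2 Hsb HsD Hhg HB1 [Hnext Hgr].
  assert (Hstep : forall t, (1 <= t)%nat -> (forall k, (k < K)%nat -> B t k = 0) ->
            forall k, (k < K)%nat -> lamB (D t k) = 0 /\ bF (D t k) = 0).
  { intros t Ht HB k Hk. destruct (Hgr t Ht) as [Hfe Hopt].
    assert (Hfe0 : forall j, (j < K)%nat -> feasible 0 (D t j)).
    { intros j Hj. rewrite <- (HB j Hj). apply Hfe; exact Hj. }
    split.
    - apply (key K P eta1 sb2 sD2 (h t) (g t) (D t) k); try lra; try assumption.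
      + intros j Hj. apply Hhg; assumption.
      + intros d' Hd'. apply Hopt. intros j Hj. rewrite (HB j Hj). apply Hd'; exact Hj.
    - destruct (Hfe0 k Hk) as [_ [_ [_ [_ [H1 H2]]]]]. lra. }
  assert (HBall : forall t, (1 <= t)%nat -> forall k, (k < K)%nat -> B t k = 0).
  { intros t Ht. induction t as [|t IH]; [lia|].
    destruct (Nat.eq_dec t 0) as [->|Ht0]; [exact HB1|].
    assert (Ht1 : (1 <= t)%nat) by lia.
    intros k Hk. rewrite (Hnext t k Ht1 Hk).
    destruct (Hstep t Ht1 (IH Ht1) k Hk) as [Hl Hbf].
    unfold battery_next. rewrite Hl, Hbf, (IH Ht1 k Hk). ring. }
  intros t k Ht Hk.
  destruct (Hstep t Ht (HBall t Ht) k Hk). repeat split; auto.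
Qed.
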